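(* Let $\mathbf{L}$ be the $8\times 12$ $(0,1)$-matrix with rows $(1,1,0,1,0,0,0,0,0,0,0,0)$, $(1,1,0,0,1,0,0,0,0,1,0,0)$, $(1,0,1,0,0,1,0,0,0,0,1,0)$, $(1,0,1,0,0,0,1,0,0,0,0,0)$, $(0,1,1,0,0,0,0,1,0,0,0,1)$, $(0,1,1,0,0,0,0,0,1,0,0,0)$, $(1,\dots,1)$, $(0,\dots,0)$, and $\mathbf{R}$ the $8\times12$ $(0,1)$-matrix with rows $(1,1,0,0,1,0,0,\dots,0)$, $(1,1,1,0,0,1,0,\dots,0)$, $(1,1,1,1,0,0,0,\dots,0)$, $(1,0,1,0,1,0,0,\dots,0)$, $(1,1,0,1,0,1,0,\dots,0)$, $(1,0,0,1,0,1,0,\dots,0)$, $(1,\dots,1)$, $(0,\dots,0)$ (in the first six rows, the last six entries are $0$). Then $(\mathbf{L},\mathbf{R})$ is centered and $\mathbf{L}\preceq^{\mathrm{BC}}\mathbf{R}$, but $\mathbf{L}\not\preceq^{\mathrm{PC}}\mathbf{R}$; specifically, for $v=(2,1,1,3,1,3,0,0)$ one has $v\mathbf{L}\not\preceq v\mathbf{R}$.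
   Context: $\mathbf{A}_{(i)}$ is the $i$-th row; $e$ the all-ones row vector; $|v|=\sum_k|v_k|$. A pair of $(0,1)$-matrices with the same number of rows, having a common all-zero row, is centered if $|\mathbf{L}_{(i)}|=|\mathbf{R}_{(i)}|$ for all $i$ and some row satisfies $\mathbf{L}_{(i)}=e=\mathbf{R}_{(i)}$. For $x,y\in\mathbb{R}^d$, $x\preceq y$ means $\sum_{n=1}^k x^\downarrow_n\le\sum_{n=1}^k y^\downarrow_n$ for $k=1,\dots,d-1$ and $\sum_n x_n=\sum_n y_n$, with $x^\downarrow_n$ the $n$-th largest component. $\mathbf{L}\preceq^{\mathrm{BC}}\mathbf{R}$ means $v\mathbf{L}\preceq v\mathbf{R}$ for all $v\in\{0,1\}^8$; $\mathbf{L}\preceq^{\mathrm{PC}}\mathbf{R}$ means $v\mathbf{L}\preceq v\mathbf{R}$ for all $v\in\mathbb{R}_{\ge0}^8$ (row vectors $v$). *)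

(* Defs.v *)
From HB Require Import structures.
From mathcomp Require Import all_boot all_order all_algebra.
From mathcomp Require Import reals.
Set Implicit Arguments. Unset Strict Implicit. Unset Printing Implicit Defensive.
Import Order.TTheory GRing.Theory Num.Theory.
Local Open Scope ring_scope.

Section Defs.
Variable R : realDomainType.

Definition decr {d : nat} (x : 'rV[R]_d) : seq R :=
  sort (fun a b : R => b <= a) [seq x ord0 j | j <- enum 'I_d].

Definition topsum {d : nat} (x : 'rV[R]_d) (k : nat) : R :=
  \sum_(n < k) nth 0 (decr x) n.

Definition majorized {d : nat} (x y : 'rV[R]_d) : Prop :=
  (forall k : nat, (1 <= k <= d - 1)%N -> topsum x k <= topsum y k) /\
  \sum_(j < d) x ord0 j = \sum_(j < d) y ord0 j.

Definition is01 {m n : nat} (A : 'M[R]_(m, n)) : Prop :=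
  forall i j, A i j = 0 \/ A i j = 1.

Definition l1norm {n : nat} (v : 'rV[R]_n) : R := \sum_(k < n) `|v ord0 k|.

Definition ones {n : nat} : 'rV[R]_n := const_mx 1.

Definition centered {m n : nat} (L Rm : 'M[R]_(m, n)) : Prop :=
  [/\ is01 L, is01 Rm,
      exists i, row i L = 0 /\ row i Rm = 0,
      forall i, l1norm (row i L) = l1norm (row i Rm)
    & exists i, row i L = ones /\ row i Rm = ones].

Definition BC_le {n : nat} (L Rm : 'M[R]_(8, n)) : Prop :=
  forall v : 'rV[R]_8, (forall i, v ord0 i = 0 \/ v ord0 i = 1) ->
    majorized (v *m L) (v *m Rm).

Definition PC_le {n : nat} (L Rm : 'M[R]_(8, n)) : Prop :=
  forall v : 'rV[R]_8, (forall i, 0 <= v ord0 i) ->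
    majorized (v *m L) (v *m Rm).

Definition Lrows : seq (seq nat) :=
  [:: [:: 1;1;0;1;0;0;0;0;0;0;0;0];
      [:: 1;1;0;0;1;0;0;0;0;1;0;0];
      [:: 1;0;1;0;0;1;0;0;0;0;1;0];
      [:: 1;0;1;0;0;0;1;0;0;0;0;0];
      [:: 0;1;1;0;0;0;0;1;0;0;0;1];
      [:: 0;1;1;0;0;0;0;0;1;0;0;0];
      [:: 1;1;1;1;1;1;1;1;1;1;1;1];
      [:: 0;0;0;0;0;0;0;0;0;0;0;0]]%N.

Definition Rrows : seq (seq nat) :=
  [:: [:: 1;1;0;0;1;0;0;0;0;0;0;0];
      [:: 1;1;1;0;0;1;0;0;0;0;0;0];
      [:: 1;1;1;1;0;0;0;0;0;0;0;0];
      [:: 1;0;1;0;1;0;0;0;0;0;0;0];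
      [:: 1;1;0;1;0;1;0;0;0;0;0;0];
      [:: 1;0;0;1;0;1;0;0;0;0;0;0];
      [:: 1;1;1;1;1;1;1;1;1;1;1;1];
      [:: 0;0;0;0;0;0;0;0;0;0;0;0]]%N.

Definition mx_of_rows (s : seq (seq nat)) : 'M[R]_(8, 12) :=
  \matrix_(i < 8, j < 12) (nth 0%N (nth [::] s i) j)%:R.

Definition Lmx : 'M[R]_(8, 12) := mx_of_rows Lrows.
Definition Rmx : 'M[R]_(8, 12) := mx_of_rows Rrows.

Definition vwit : 'rV[R]_8 :=
  \row_(i < 8) (nth 0%N [:: 2; 1; 1; 3; 1; 3; 0; 0]%N i)%:R.

End Defs.

(* Main.v *)
Require Import Defs.
From HB Require Import structures.
From mathcomp Require Import all_boot all_order all_algebra.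
From mathcomp Require Import reals.
From mathcomp Require Import zify.
Import Order.TTheory GRing.Theory Num.Theory.
Local Open Scope ring_scope.

Definition geqn (a b : nat) : bool := (b <= a)%N.

Definition majb (a b : seq nat) (m : nat) : bool :=
  all (fun k => sumn (take k (sort geqn a)) <= sumn (take k (sort geqn b)))%N
      (iota 1 m) && (sumn a == sumn b).

Lemma sum_nth_take (S : seq nat) k :
  (\sum_(n < k) nth 0 S n)%N = sumn (take k S).
Proof.
elim: k => [|k IH]; first by rewrite big_ord0 take0.
rewrite big_ord_recr /= IH.
case: (ltnP k (size S)) => Hk.
  by rewrite (take_nth 0 Hk) -cats1 sumn_cat /= addn0.
by rewrite (nth_default 0 Hk) addn0 !take_oversize // ltnW.
Qed.

Section Gen.
Variable R : realDomainType.

Lemma nth_map_nat (s : seq nat) n :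
  nth (0:R) [seq (x%:R : R) | x <- s] n = (nth 0%N s n)%:R.
Proof. by elim: s n => [|a s IH] [|n] //=. Qed.

Lemma majE d (x y : 'rV[R]_d) a b :
  size a = d -> size b = d ->
  (forall j : 'I_d, x ord0 j = (nth 0%N a j)%:R) ->
  (forall j : 'I_d, y ord0 j = (nth 0%N b j)%:R) ->
  majorized x y <-> majb a b (d - 1).
Proof.
move=> Ha Hb Hx Hy.
have Hseq : forall (z : 'rV[R]_d) c, size c = d ->
    (forall j : 'I_d, z ord0 j = (nth 0%N c j)%:R) ->
    [seq z ord0 j | j <- enum 'I_d] = [seq (n%:R : R) | n <- c].
  move=> z c Hc Hz.
  rewrite (eq_map Hz).
  transitivity [seq (nth 0%N c n)%:R : R | n <- map val (enum 'I_d)].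
    by rewrite -map_comp.
  by rewrite val_enum_ord map_comp -Hc (map_nth_iota0 _ (leqnn _)) take_size.
have Hdecr : forall (z : 'rV[R]_d) c, size c = d ->
    (forall j : 'I_d, z ord0 j = (nth 0%N c j)%:R) ->
    decr z = [seq (n%:R : R) | n <- sort geqn c].
  move=> z c Hc Hz; rewrite /decr (Hseq z c Hc Hz).
  symmetry; apply: (@map_sort _ _ _ geqn) => u v /=; by rewrite /geqn ler_nat.
have Htop : forall (z : 'rV[R]_d) c k, size c = d ->
    (forall j : 'I_d, z ord0 j = (nth 0%N c j)%:R) ->
    topsum z k = (sumn (take k (sort geqn c)))%:R.
  move=> z c k Hc Hz; rewrite /topsum (Hdecr z c Hc Hz) -sum_nth_take natr_sum.
  by apply: eq_bigr => n _; rewrite nth_map_nat.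
have Hsum : forall (z : 'rV[R]_d) c, size c = d ->
    (forall j : 'I_d, z ord0 j = (nth 0%N c j)%:R) ->
    \sum_(j < d) z ord0 j = (sumn c)%:R.
  move=> z c Hc Hz; rewrite (eq_bigr _ (fun j _ => Hz j)) -natr_sum.
  by rewrite sum_nth_take -Hc take_size.
rewrite /majorized /majb (Hsum x a Ha Hx) (Hsum y b Hb Hy).
split.
  move=> [H1 /eqP]; rewrite eqr_nat => H2; rewrite H2 andbT; apply/allP => k.
  rewrite mem_iota => Hk.
  have := H1 k; rewrite (Htop x a k Ha Hx) (Htop y b k Hb Hy) ler_nat; apply.
  lia.
move=> /andP[/allP H1 /eqP H2]; split; last by rewrite H2.
move=> k Hk; rewrite (Htop x a k Ha Hx) (Htop y b k Hb Hy) ler_nat; apply: H1.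
rewrite mem_iota; lia.
Qed.
End Gen.

Definition natvecmul (w : seq nat) (s : seq (seq nat)) : seq nat :=
  [seq sumn [seq (nth 0 w i * nth 0 (nth [::] s i) j)%N | i <- iota 0 8]
  | j <- iota 0 12].

Fixpoint allbins (n : nat) : seq (seq nat) :=
  if n is n'.+1 then map (cons 0%N) (allbins n') ++ map (cons 1%N) (allbins n')
  else [:: [::]].

Lemma allbinsP n w : size w = n -> all (fun x => x <= 1)%N w -> w \in allbins n.
Proof.
elim: n w => [|n IH] [|a w] //= [Hs] /andP[Ha Hw].
rewrite mem_cat; case: a Ha => [|[|]] // _.
  by rewrite map_f ?IH.
by rewrite orbC map_f ?IH.
Qed.

Lemma sumn_iota (G : nat -> nat) n :
  sumn [seq G i | i <- iota 0 n] = (\sum_(i < n) G i)%N.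
Proof. by rewrite sumnE big_map -(big_mkord xpredT G) /index_iota subn0. Qed.

Lemma nth01 (s : seq (seq nat)) i j :
  all (all (fun x => x <= 1)%N) s -> (nth 0 (nth [::] s i) j <= 1)%N.
Proof.
elim: s i => [|r s IH] i; first by rewrite !nth_default.
case/andP => Hr Hs; case: i => [|i] /=; last exact: IH.
clear Hs IH; elim: r j Hr => [|a r IHr] j; first by case: j.
case/andP => Ha Hr; case: j => [|j] //=; exact: IHr.
Qed.

Section Mx.
Variable R : realDomainType.

Definition vec (w : seq nat) : 'rV[R]_8 := \row_(i < 8) (nth 0%N w i)%:R.

Lemma mulE w s (j : 'I_12) :
  (vec w *m mx_of_rows R s) ord0 j = (nth 0%N (natvecmul w s) j)%:R.
Proof.
rewrite !mxE /natvecmul (nth_map 0%N); last by rewrite size_iota.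
rewrite nth_iota // sumn_iota natr_sum; apply: eq_bigr => i _.
by rewrite !mxE add0n natrM.
Qed.

Lemma majW w s1 s2 :
  majorized (vec w *m mx_of_rows R s1) (vec w *m mx_of_rows R s2) <->
  majb (natvecmul w s1) (natvecmul w s2) 11.
Proof.
apply: (@majE R 12); rewrite ?size_map ?size_iota // => j; exact: mulE.
Qed.

Lemma rowsum s (i : 'I_8) :
  l1norm (row i (mx_of_rows R s)) = (sumn (take 12 (nth [::] s i)))%:R.
Proof.
rewrite /l1norm -sum_nth_take natr_sum; apply: eq_bigr => k _.
by rewrite !mxE ger0_norm.
Qed.
End Mx.

Theorem mainTheorem10 (R : realType) :
  [/\ centered (Lmx R) (Rmx R),
      BC_le (Lmx R) (Rmx R),
      ~ PC_le (Lmx R) (Rmx R)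
    & ~ majorized (vwit R *m Lmx R) (vwit R *m Rmx R)].
Proof.
have Hw : ~ majorized (vwit R *m Lmx R) (vwit R *m Rmx R).
  have -> : vwit R = vec R [:: 2; 1; 1; 3; 1; 3; 0; 0]%N by [].
  by rewrite /Lmx /Rmx majW; vm_compute.
split => //.
- split.
  + move=> i j; rewrite mxE.
    have : (nth 0 (nth [::] Lrows i) j <= 1)%N by apply: nth01; vm_compute.
    by case: (nth _ _ _) => [|[|]] // _; [left | right].
  + move=> i j; rewrite mxE.
    have : (nth 0 (nth [::] Rrows i) j <= 1)%N by apply: nth01; vm_compute.
    by case: (nth _ _ _) => [|[|]] // _; [left | right].
  + exists (inord 7); split; apply/rowP => j; rewrite !mxE inordK //;
      by rewrite (_ : nth [::] _ 7 = nseq 12 0%N) // nth_nseq if_same.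
  + move=> i; rewrite !rowsum; congr (_%:R).
    by case: i => [[|[|[|[|[|[|[|[|i]]]]]]]] Hi] //; vm_compute.
  + exists (inord 6); split; apply/rowP => j; rewrite !mxE inordK //;
      by rewrite (_ : nth [::] _ 6 = nseq 12 1%N) // nth_nseq (ltn_ord j).
- move=> v Hv.
  pose w := mkseq (fun i => nat_of_bool (v ord0 (inord i) == 1)) 8.
  have -> : v = vec R w.
    apply/rowP => i; rewrite !mxE /w nth_mkseq // inord_val.
    by case: (Hv i) => ->; rewrite ?eqxx // eq_sym oner_eq0.
  rewrite /Lmx /Rmx majW.
  have Hin : w \in allbins 8.
    apply: allbinsP; first by rewrite size_mkseq.
    by apply/allP => x /mapP [i _ ->]; case: (_ == _).
  have Hall : all (fun w => majb (natvecmul w Lrows) (natvecmul w Rrows) 11) (allbins 8)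
    by vm_compute.
  exact: (allP Hall w Hin).
- move=> H; apply: Hw; apply: H => i; rewrite mxE; exact: ler0n.
Qed.
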